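(* For every $\mathcal S\in\mathrm{TP}(n)$, the polyhedral cone in $\mathbb{R}^{\binom{[n]}{2}}$ defined by the system $F_{\mathcal S}$ is exactly $K_{\mathcal S}=\mathbb{R}(1,\dots,1)^T+\mathrm{cone}\{-v_C: C\in\mathcal S^\circ\}$.
   Context: A rooted tree on leaf set $[n]$ has leaves labeled bijectively by $[n]$ and internal vertices each with at least two children; a clade is the set of leaves below an internal vertex, and $\mathrm{clade}(T)$ is the set of clades (including $[n]$). $\mathrm{TP}(n)$ is the collection of sets $\mathcal S=\mathrm{clade}(T_1)\cup\mathrm{clade}(T_2)$ for rooted trees $T_1,T_2$ on leaf set $[n]$; $\mathcal S^\circ=\mathcal S\setminus\{[n]\}$. For $C\subseteq[n]$, $v_C\in\mathbb{R}^{\binom{[n]}{2}}$ is the characteristic vector of $\binom{C}{2}$. The clade intersection poset $\mathrm{cip}(\mathcal S)$ consists of $\mathcal S$ together with all intersections of elements of $\mathcal S$ having at least two elements, ordered by inclusion; $\mathrm{cip}(\mathcal S)^\circ=\mathrm{cip}(\mathcal S)\setminus\{[n]\}$. It is a join-semilattice; $A\vee B$ denotes the join (least element containing both). For a pair $i\ne j$, $\overline{ij}$ is the smallest element of $\mathrm{cip}(\mathcal S)$ containing $\{i,j\}$; every $C\in\mathrm{cip}(\mathcal S)$ equals $\overline{ij}$ for some pair, and for each $C$ we write $\delta_C:=\delta_{ij}$ for a fixed such pair $ij$. For $C\in\mathrm{cip}(\mathcal S)^\circ$, its parents $D_1,\dots,D_r$ are the elements of $\mathrm{cip}(\mathcal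 S)$ covering $C$; set $D_\emptyset=C$ and $D_I=\bigvee_{i\in I}D_i$ for nonempty $I\subseteq[r]$. The system $F_{\mathcal S}$ on $\delta\in\mathbb{R}^{\binom{[n]}{2}}$ consists of: (a) $\delta_{ij}=\delta_{kl}$ whenever $\overline{ij}=\overline{kl}$; (b) for each $C\in\mathcal S^\circ$ with parents $D_1,\dots,D_r$, the inequality $\sum_{I\subseteq[r]}(-1)^{|I|}\delta_{D_I}\le 0$; (c) for each $C\in\mathrm{cip}(\mathcal S)\setminus\mathcal S$ with parents $D_1,\dots,D_r$, the equation $\sum_{I\subseteq[r]}(-1)^{|I|}\delta_{D_I}=0$. *)

(* Defs.v *)
From HB Require Import structures.
From mathcomp Require Import all_boot all_order all_algebra.
Set Implicit Arguments. Unset Strict Implicit. Unset Printing Implicit Defensive.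
Import Order.TTheory GRing.Theory Num.Theory.

(* A (plane representation of a) rooted tree: a leaf carries a label,
   an internal vertex carries the list of its children.  The order of the
   children is irrelevant for everything below. *)
Inductive rtree (n : nat) : Type :=
| Leaf : 'I_n -> rtree n
| Node : seq (rtree n) -> rtree n.

Arguments Leaf {n}.
Arguments Node {n}.

Section Trees.
Variable n : nat.

Fixpoint leaves (t : rtree n) : seq 'I_n :=
  match t with
  | Leaf i => [:: i]
  | Node ts => flatten (map leaves ts)
  end.

Fixpoint wf_tree (t : rtree n) : bool :=
  match t with
  | Leaf _ => true
  | Node ts => (2 <= size ts) && all wf_tree ts
  end.

Definition is_tree_on (t : rtree n) : Prop :=
  wf_tree t /\ perm_eq (leaves t) (enum 'I_n).

Fixpoint clade_list (t : rtree n) : seq {set 'I_n} :=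
  match t with
  | Leaf _ => [::]
  | Node ts => [set x in leaves t] :: flatten (map clade_list ts)
  end.

Definition clade (t : rtree n) : {set {set 'I_n}} := [set C in clade_list t].

Definition cip (S : {set {set 'I_n}}) : {set {set 'I_n}} :=
  S :|: [set C : {set 'I_n} | (2 <= #|C|) &&
          [exists F : {set {set 'I_n}},
             [&& F != set0, F \subset S & C == \bigcap_(D in F) D]]].

(* least element of cip(S) containing U (default setT if none exists) *)
Definition cip_lub (S : {set {set 'I_n}}) (U : {set 'I_n}) : {set 'I_n} :=
  odflt setT [pick D in cip S | (U \subset D) &&
      [forall E in cip S, (U \subset E) ==> (D \subset E)]].

Definition parents (S : {set {set 'I_n}}) (C : {set 'I_n}) : {set {set 'I_n}} :=
  [set D in cip S | (C \proper D) &&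
     [forall E in cip S, ~~ ((C \proper E) && (E \proper D))]].

Definition DI (S : {set {set 'I_n}}) (C : {set 'I_n}) (I : {set {set 'I_n}})
  : {set 'I_n} :=
  if I == set0 then C else cip_lub S (\bigcup_(D in I) D).

End Trees.

Notation pairT n := {A : {set 'I_n} | #|A| == 2%N}.

Section System.
Variables (R : realFieldType) (n : nat).
Local Open Scope ring_scope.

Definition vC (C : {set 'I_n}) (p : pairT n) : R :=
  if val p \subset C then 1 else 0.

(* delta_C := delta_{ij} for a fixed pair {i,j} with overline{ij} = C *)
Definition deltaC (S : {set {set 'I_n}}) (d : pairT n -> R) (C : {set 'I_n}) : R :=
  match [pick p : pairT n | cip_lub S (val p) == C] with
  | Some p => d p
  | None => 0
  end.

Definition altsum (S : {set {set 'I_n}}) (d : pairT n -> R) (C : {set 'I_n}) : R :=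
  \sum_(I in powerset (parents S C)) (-1) ^+ #|I| * deltaC S d (DI S C I).

Definition F_system (S : {set {set 'I_n}}) (d : pairT n -> R) : Prop :=
  [/\ (forall p q : pairT n, cip_lub S (val p) = cip_lub S (val q) -> d p = d q),
      (forall C, C \in S :\ setT -> altsum S d C <= 0) &
      (forall C, C \in cip S :\: S -> altsum S d C = 0)].

Definition in_K (S : {set {set 'I_n}}) (d : pairT n -> R) : Prop :=
  exists (lam : R) (mu : {set 'I_n} -> R),
    (forall C, C \in S :\ setT -> 0 <= mu C) /\
    (forall p, d p = lam - \sum_(C in S :\ setT) mu C * vC C p).

End System.

(* Main.v *)
Set Warnings "-notation-overridden,-ambiguous-paths".
Require Import Defs.
From HB Require Import structures.
From mathcomp Require Import all_boot all_order all_algebra.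
Set Implicit Arguments. Unset Strict Implicit. Unset Printing Implicit Defensive.
Import Order.TTheory GRing.Theory Num.Theory.

Section AltSum.
Variables (R : realFieldType) (T : finType).
Local Open Scope ring_scope.

Lemma sum_alt (A : {set T}) :
  \sum_(I in powerset A) (-1) ^+ #|I| = (A == set0)%:R :> R.
Proof.
have [->|/set0Pn [a Ha]] := eqVneq A set0.
  by rewrite powerset0 big_set1 cards0 expr0.
rewrite /=.
pose h (I : {set T}) := if a \in I then I :\ a else a |: I.
have hK : involutive h.
  move=> I; rewrite /h; case: (boolP (a \in I)) => aI.
    by rewrite setD11 setD1K.
  by rewrite setU11 setU1K.
set s := (X in X = _).
have : s = - s.
  rewrite {1}/s (reindex_inj (inv_inj hK)) /=.
  rewrite -sumrN; apply: eq_big => I.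
    rewrite !powersetE /h; case: ifP => aI.
      apply/idP/idP => H; last by apply: subset_trans H; apply: subsetDl.
      by rewrite -(setD1K aI) subUset sub1set Ha.
    by rewrite subUset sub1set Ha.
  move=> _; rewrite /h; case: ifP => aI.
    by rewrite -{2}(setD1K aI) cardsU1 !inE eqxx /= exprS mulN1r opprK.
  by rewrite cardsU1 aI /= exprS mulN1r.
move/eqP; rewrite -addr_eq0 -mulr2n mulrn_eq0 /= => /eqP ->.
done.
Qed.
End AltSum.
Section Cip.
Variable n : nat.
Variable S : {set {set 'I_n}}.
Hypothesis ST : setT \in S.
Hypothesis S2 : forall C, C \in S -> 1 < #|C|.

Lemma S_cip C : C \in S -> C \in cip S.
Proof. by rewrite /cip inE => ->. Qed.

Lemma cip_card C : C \in cip S -> 1 < #|C|.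
Proof. by rewrite /cip inE => /orP [/S2 // | ]; rewrite inE => /andP []. Qed.

Lemma cipT : setT \in cip S.
Proof. exact: S_cip. Qed.

Lemma cip_form E : E \in cip S ->
  exists F : {set {set 'I_n}}, [/\ F != set0, F \subset S & E = \bigcap_(D in F) D].
Proof.
rewrite /cip inE => /orP [ES | ].
  exists [set E]; split; first by apply/set0Pn; exists E; rewrite inE.
    by rewrite sub1set.
  by rewrite big_set1.
rewrite inE => /andP [_ /existsP [F /and3P [F0 FS /eqP ->]]].
by exists F.
Qed.

Lemma lubP (U : {set 'I_n}) : 1 < #|U| ->
  [/\ cip_lub S U \in cip S, U \subset cip_lub S U &
      forall E, E \in cip S -> U \subset E -> cip_lub S U \subset E].
Proof.
move=> hU; rewrite /cip_lub; case: pickP => [D /andP [HD /andP [HUD /forall_inP H]] | Hn].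
  by split => // E HE HUE; exact: (implyP (H E HE)) HUE.
exfalso.
pose F := [set X in S | U \subset X].
pose M := \bigcap_(X in F) X.
have UM : U \subset M by apply/bigcapsP => X; rewrite inE => /andP [].
have MC : M \in cip S.
  rewrite /cip !inE; apply/orP; right; apply/andP; split.
    exact: leq_trans hU (subset_leq_card UM).
  apply/existsP; exists F; rewrite eqxx andbT; apply/andP; split.
    by apply/set0Pn; exists setT; rewrite inE ST subsetT.
  by apply/subsetP => X; rewrite inE => /andP [].
have HM : [forall E in cip S, (U \subset E) ==> (M \subset E)].
  apply/forall_inP => E HE; apply/implyP => UE.
  have [F' [F'0 F'S EF]] := cip_form HE.
  rewrite EF; apply/bigcapsP => X XF'; apply: bigcap_inf; rewrite inE (subsetP F'S _ XF') /=.
  by apply: subset_trans UE _; rewrite EF; apply: bigcap_inf.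
by move: (Hn M); rewrite MC UM HM.
Qed.

Lemma parent_below C E : C \in cip S -> E \in cip S -> C \proper E ->
  exists2 D, D \in parents S C & D \subset E.
Proof.
move=> HC HE CE.
pose P X := [&& X \in cip S, C \proper X & X \subset E].
have PE : P E by rewrite /P HE CE subxx.
case: (@arg_minnP _ E P (fun X : {set 'I_n} => #|X|) PE) => X /and3P [XC CX XE] Hmin.
exists X => //; rewrite /parents inE XC CX /=.
apply/forall_inP => Y YC; apply/negP => /andP [CY YX].
have : P Y by rewrite /P YC CY (subset_trans (proper_sub YX) XE).
move/Hmin; rewrite leqNgt => /negP; apply; exact: proper_card.
Qed.

Lemma card_up (C D U : {set 'I_n}) : 1 < #|C| -> C \proper D -> D \subset U -> 1 < #|U|.
Proof.
move=> h1 h2 h3; have h4 := proper_card h2; have h5 := subset_leq_card h3.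
by apply: leq_trans h5; apply: ltn_trans h4.
Qed.

Lemma DI_cip C (I : {set {set 'I_n}}) : C \in cip S -> I \subset parents S C -> DI S C I \in cip S.
Proof.
move=> HC HI; rewrite /DI; case: eqP => [//| /eqP /set0Pn [D HD]].
have DP := subsetP HI _ HD; move: DP; rewrite inE => /and3P [_ CD _].
suff : 1 < #|\bigcup_(D0 in I) D0| by case/lubP.
by apply: card_up (cip_card HC) CD _; apply: bigcup_sup.
Qed.

Lemma DI_big C (I : {set {set 'I_n}}) : C \in cip S -> I \subset parents S C -> I != set0 ->
  C \proper DI S C I.
Proof.
move=> HC HI /negPf I0; rewrite /DI I0.
have [D HD] : exists D, D \in I.
  by move/negbT: I0 => /set0Pn.
have DP := subsetP HI _ HD; move: DP; rewrite inE => /and3P [_ CD _].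
have DU : D \subset \bigcup_(D0 in I) D0 by apply: bigcup_sup.
have : 1 < #|\bigcup_(D0 in I) D0|.
  exact: card_up (cip_card HC) CD DU.
case/lubP => _ UL _.
exact: proper_sub_trans CD (subset_trans DU UL).
Qed.

Lemma C_sub_DI C (I : {set {set 'I_n}}) : C \in cip S -> I \subset parents S C -> C \subset DI S C I.
Proof.
move=> HC HI; case: (eqVneq I set0) => [->|I0]; first by rewrite /DI eqxx.
exact: proper_sub (DI_big HC HI I0).
Qed.

Lemma DI_sub C (I : {set {set 'I_n}}) E : C \in cip S -> I \subset parents S C -> E \in cip S ->
  C \subset E -> (DI S C I \subset E) = (I \subset [set D in parents S C | D \subset E]).
Proof.
move=> HC HI HE CE; rewrite /DI; case: eqP => [->|/eqP I0]; first by rewrite CE sub0set.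
have [D HD] : exists D, D \in I by move/set0Pn: I0.
have DP := subsetP HI _ HD; move: DP; rewrite inE => /and3P [_ CD _].
have : 1 < #|\bigcup_(D0 in I) D0|.
  by apply: card_up (cip_card HC) CD _; apply: bigcup_sup.
case/lubP => _ UL Lmin.
apply/idP/idP => H.
  apply/subsetP => D' HD'; rewrite inE (subsetP HI _ HD') /=.
  apply: subset_trans (subset_trans UL H); exact: bigcup_sup.
apply: Lmin => //; apply/bigcupsP => D' HD'.
by move: (subsetP H _ HD'); rewrite inE => /andP [].
Qed.

Lemma keyA (R : realFieldType) C E : C \in cip S -> E \in cip S ->
  (\sum_(I in powerset (parents S C)) (-1) ^+ #|I| * (DI S C I \subset E)%:R
    = (E == C)%:R :> R)%R.
Proof.
move=> HC HE.
have [CE|nCE] := boolP (C \subset E); last first.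
  rewrite big1; last first.
    move=> I; rewrite powersetE => HI.
    case H : (DI S C I \subset E); last by rewrite mulr0.
    by move: nCE; rewrite (subset_trans (C_sub_DI HC HI) H).
  by case: eqP => // EC; move: nCE; rewrite EC subxx.
set P := [set D in parents S C | D \subset E].
transitivity (\sum_(I in powerset P) (-1) ^+ #|I| : R)%R.
  transitivity (\sum_(I in powerset (parents S C) | I \subset P) (-1) ^+ #|I| : R)%R.
    rewrite big_mkcondr /=; apply: eq_bigr => I; rewrite powersetE => HI.
    rewrite (DI_sub HC HI HE CE).
    by case: (I \subset P); rewrite ?mulr1 ?mulr0.
  apply: eq_bigl => I; rewrite !powersetE.
  apply/andP/idP => [[] //|IP]; split => //.
  by apply: subset_trans IP _; apply/subsetP => D; rewrite inE => /andP [].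
rewrite sum_alt; suff -> : (P == set0) = (E == C) by [].
apply/eqP/eqP => [P0|EC].
  apply/eqP; apply: contraT => EC.
  have CpE : C \proper E by rewrite properEneq eq_sym EC CE.
  have [D HD DE] := parent_below HC HE CpE.
  by move: P0 => /setP /(_ D); rewrite /P inE HD DE inE.
rewrite /P EC; apply/setP => D; rewrite !inE.
apply/negbTE; apply/negP => /andP [/and3P [_ CD _] DC].
by move: (proper_sub_trans CD DC); rewrite properxx.
Qed.

End Cip.
Section Dir.
Variables (R : realFieldType) (n : nat) (S : {set {set 'I_n}}).
Hypothesis ST : setT \in S.
Hypothesis S2 : forall C, C \in S -> (1 < #|C|)%N.
Local Open Scope ring_scope.

Lemma lub_sub_iff (p : pairT n) C : C \in cip S ->
  (cip_lub S (val p) \subset C) = (val p \subset C).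
Proof.
move=> HC; have c2 : (1 < #|val p|)%N by rewrite (eqP (valP p)).
have [_ UL Lmin] := lubP ST c2.
apply/idP/idP => H; first exact: subset_trans UL H.
exact: Lmin.
Qed.

Lemma lub_cip (p : pairT n) : cip_lub S (val p) \in cip S.
Proof.
have c2 : (1 < #|val p|)%N by rewrite (eqP (valP p)).
by have [] := lubP ST c2.
Qed.

Lemma deltaC_lub (d : pairT n -> R)
  (Ha : forall p q : pairT n, cip_lub S (val p) = cip_lub S (val q) -> d p = d q)
  (p : pairT n) : deltaC S d (cip_lub S (val p)) = d p.
Proof.
rewrite /deltaC; case: pickP => [q /eqP Hq | H]; first exact: Ha.
by move: (H p); rewrite eqxx.
Qed.

Hypothesis PE : forall D, D \in cip S -> exists p : pairT n, cip_lub S (val p) = D.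

Lemma deltaC_f (d : pairT n -> R) (f : {set 'I_n} -> R)
  (Hf : forall p, d p = f (cip_lub S (val p))) D :
  D \in cip S -> deltaC S d D = f D.
Proof.
move=> HD; rewrite /deltaC; case: pickP => [q /eqP <- | H]; first exact: Hf.
by have [p Hp] := PE HD; move: (H p); rewrite Hp eqxx.
Qed.

Lemma sum_mu_eq (mu : {set 'I_n} -> R) C :
  \sum_(C' in S :\ setT) mu C' * (C' == C)%:R = if C \in S :\ setT then mu C else 0.
Proof.
case: ifP => HC.
  rewrite (bigD1 C) //= eqxx mulr1 big1 ?addr0 // => C' /andP [_ /negPf ->].
  by rewrite mulr0.
apply: big1 => C' HC'; case: eqP => [E|]; last by rewrite mulr0.
by move: HC; rewrite -E HC'.
Qed.

Lemma K_F (d : pairT n -> R) : in_K S d -> F_system S d.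
Proof.
move=> [lam [mu [Hmu Hd]]].
pose f (D : {set 'I_n}) := lam - \sum_(C in S :\ setT) mu C * (D \subset C)%:R.
have Hf : forall p, d p = f (cip_lub S (val p)).
  move=> p; rewrite Hd /f; congr (_ - _); apply: eq_bigr => C.
  rewrite in_setD1 => /andP [_ CS]; rewrite /vC lub_sub_iff ?S_cip //.
  by case: (val p \subset C); rewrite ?mulr1 ?mulr0.
have Halt : forall C, C \in cip S -> C != setT ->
    altsum S d C = - \sum_(C' in S :\ setT) mu C' * (C' == C)%:R.
  move=> C HC CT; rewrite /altsum.
  have -> : \sum_(I in powerset (parents S C)) (-1) ^+ #|I| * deltaC S d (DI S C I)
     = \sum_(I in powerset (parents S C)) (-1) ^+ #|I| * f (DI S C I).
    apply: eq_bigr => I; rewrite powersetE => HI.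
    by rewrite (deltaC_f Hf) // (DI_cip ST S2 HC HI).
  rewrite /f; under eq_bigr do rewrite mulrBr mulr_sumr.
  rewrite sumrB -mulr_suml sum_alt.
  have -> : (parents S C == set0) = false.
    apply/negP => /eqP P0.
    have CpT : C \proper setT by rewrite properT.
    have [D HD _] := parent_below HC (cipT ST) CpT.
    by move: HD; rewrite P0 inE.
  rewrite mul0r sub0r; congr (- _).
  rewrite exchange_big /=; apply: eq_bigr => C'; rewrite in_setD1 => /andP [_ C'S].
  rewrite -(keyA ST S2 R HC (S_cip C'S)) mulr_sumr; apply: eq_bigr => I _.
  by rewrite mulrCA.
split.
- by move=> p q H; rewrite !Hf H.
- move=> C HC; move: (HC); rewrite in_setD1 => /andP [CT CS].
  rewrite (Halt C (S_cip CS) CT) sum_mu_eq HC oppr_le0; exact: Hmu.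
- move=> C; move/setDP => [HC nCS].
  have CT : C != setT by apply: contraNneq nCS => ->.
  rewrite (Halt C HC CT) sum_mu_eq in_setD1 (negPf nCS) andbF oppr0 //.
Qed.

Lemma F_K (d : pairT n -> R) : F_system S d -> in_K S d.
Proof.
move=> [Ha Hb Hc].
pose h E := if E == setT then deltaC S d setT else altsum S d E.
have step : forall D, D \in cip S ->
    (forall D', D' \in cip S -> D \proper D' ->
        deltaC S d D' = \sum_(E in cip S | D' \subset E) h E) ->
    deltaC S d D = \sum_(E in cip S | D \subset E) h E.
  move=> D HD IH; case DT: (D == setT).
    move/eqP: DT => ->; rewrite (big_pred1 setT); first by rewrite /h eqxx.
    by move=> E /=; rewrite subTset andb_idl // => /eqP ->; exact: cipT.
  pose X I := \sum_(E in cip S | D \subset E) (DI S D I \subset E)%:R * h E.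
  have H1 : \sum_(I in powerset (parents S D)) (-1) ^+ #|I| * X I = altsum S d D.
    rewrite /X; under eq_bigr do rewrite mulr_sumr.
    rewrite exchange_big /=.
    transitivity (\sum_(E in cip S | D \subset E) h E * (E == D)%:R).
      apply: eq_bigr => E /andP [HE _]; rewrite -(keyA ST S2 R HD HE) mulr_sumr.
      by apply: eq_bigr => I _; rewrite mulrA mulrC.
    rewrite (bigD1 D) /=; last by rewrite HD subxx.
    rewrite eqxx mulr1 big1 ?addr0; first by rewrite /h DT.
    by move=> E /andP [_ /negPf ->]; rewrite mulr0.
  have H2 : altsum S d D = deltaC S d D +
      \sum_(I in powerset (parents S D) | I != set0) (-1) ^+ #|I| * X I.
    rewrite /altsum (bigD1 set0) /=; last by rewrite powersetE sub0set.
    rewrite cards0 expr0 mul1r /DI eqxx; congr (_ + _).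
    apply: eq_bigr => I /andP [HI I0]; rewrite powersetE in HI; congr (_ * _).
    rewrite (negPf I0); have -> : cip_lub S (\bigcup_(D0 in I) D0) = DI S D I by rewrite /DI (negPf I0).
    have HDc := DI_cip ST S2 HD HI; have HDb := DI_big ST S2 HD HI I0; rewrite IH //.
      rewrite /X [LHS]big_mkcond [RHS]big_mkcond; apply: eq_bigr => E _.
      case HE: (E \in cip S) => //=.
      case H: (DI S D I \subset E).
        by rewrite (subset_trans (C_sub_DI ST S2 HD HI) H) mul1r.
      by case: (D \subset E); rewrite ?mul0r.
  have H3 : \sum_(I in powerset (parents S D)) (-1) ^+ #|I| * X I =
      X set0 + \sum_(I in powerset (parents S D) | I != set0) (-1) ^+ #|I| * X I.
    rewrite (bigD1 set0) /=; last by rewrite powersetE sub0set.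
    by rewrite cards0 expr0 mul1r.
  have H4 : X set0 = \sum_(E in cip S | D \subset E) h E.
    rewrite /X /DI eqxx; apply: eq_bigr => E /andP [_ ->]; by rewrite mul1r.
  rewrite -H4; apply: (@addIr _ (\sum_(I in powerset (parents S D) | I != set0) (-1) ^+ #|I| * X I)).
  by rewrite -H2 -H3 H1.
have B : forall D, D \in cip S -> deltaC S d D = \sum_(E in cip S | D \subset E) h E.
  suff H : forall k D, (#|~: D| < k)%N -> D \in cip S ->
      deltaC S d D = \sum_(E in cip S | D \subset E) h E.
    by move=> D; apply: (H _ D (ltnSn _)).
  elim=> [//|k IH] D Hk HD; apply: step => // D' HD' DD'; apply: IH => //.
  have h1 : (#|~: D'| < #|~: D|)%N by apply: proper_card; rewrite properC.
  by apply: leq_trans h1 _; rewrite -ltnS.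
exists (deltaC S d setT), (fun C => - altsum S d C); split.
  by move=> C HC; rewrite oppr_ge0; apply: Hb.
move=> p; rewrite -(deltaC_lub Ha) (B _ (lub_cip p)).
rewrite (bigD1 setT) /=; last by rewrite (cipT ST) subsetT.
rewrite /h eqxx -/h -sumrN; congr (_ + _).
rewrite [LHS]big_mkcond [RHS]big_mkcond; apply: eq_bigr => E _.
rewrite in_setD1 /h.
case ES: (E \in S).
  rewrite (S_cip ES) /= (lub_sub_iff p (S_cip ES)) andbT /vC.
  case: (E == setT) => /=; rewrite ?andbF ?andbT //.
  by case: (val p \subset E); rewrite ?mulr1 ?mulr0 ?opprK ?oppr0 ?mulNr.
rewrite andbF.
case HE: (E \in cip S) => //=.
case ET: (E == setT); first by rewrite andbF.
rewrite andbT; case: (_ \subset _) => //.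
apply: Hc; apply/setDP; split => //; by rewrite ES.
Qed.

End Dir.
Section Lam.
Variable n : nat.

Definition laminar (F : {set {set 'I_n}}) :=
  forall X Y, X \in F -> Y \in F -> X :&: Y != set0 -> (X \subset Y) || (Y \subset X).

Definition erel (F : {set {set 'I_n}}) (A : {set 'I_n}) : rel 'I_n :=
  fun x y => (x == y) || [exists X in F, [&& X \proper A, x \in X & y \in X]].

Lemma meet_ne (X Y : {set 'I_n}) i : i \in X -> i \in Y -> X :&: Y != set0.
Proof. by move=> hX hY; apply/set0Pn; exists i; rewrite inE hX hY. Qed.

Lemma erel_sym F A : symmetric (erel F A).
Proof.
move=> x y; rewrite /erel eq_sym; congr (_ || _).
by apply: eq_existsb => X; rewrite [(x \in X) && _]andbC.
Qed.

Lemma erel_trans F A : laminar F -> transitive (erel F A).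
Proof.
move=> LF y x z; rewrite /erel.
move=> /orP [/eqP -> //| H1] /orP [/eqP <- | H2]; first by rewrite H1 orbT.
move/existsP: H1 => [X /andP [XF /and3P [XA xX yX]]].
move/existsP: H2 => [Y /andP [YF /and3P [YA yY zY]]].
apply/orP; right; apply/existsP.
case/orP: (LF _ _ XF YF (meet_ne yX yY)) => [XY|YX].
  by exists Y; rewrite YF YA (subsetP XY _ xX) zY.
by exists X; rewrite XF XA xX (subsetP YX _ zY).
Qed.

Lemma minimal_elt (F : {set {set 'I_n}}) (TF : setT \in F) (LF : laminar F) (D : {set 'I_n}) :
  D != set0 -> exists2 A, A \in F & D \subset A /\ (forall X, X \in F -> D \subset X -> A \subset X).
Proof.
move=> /set0Pn [x xD].
pose P X := (X \in F) && (D \subset X).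
have P0 : P setT by rewrite /P TF subsetT.
case: (@arg_minnP _ setT P (fun X : {set 'I_n} => #|X|) P0) => A /andP [AF DA] Hmin.
exists A => //; split => // X XF DX.
have AX := meet_ne (subsetP DA _ xD) (subsetP DX _ xD).
case/orP: (LF _ _ AF XF AX) => // XA.
have : #|A| <= #|X| by apply: Hmin; rewrite /P XF DX.
move=> h; have /eqP -> : X == A by rewrite eqEcard XA h.
exact: subxx.
Qed.

Lemma sep_exists (F : {set {set 'I_n}}) (LF : laminar F) (D A : {set 'I_n}) :
  1 < #|D| -> D \subset A -> (forall X, X \in F -> D \subset X -> A \subset X) ->
  exists x y, [/\ x \in D, y \in D & ~~ erel F A x y].
Proof.
move=> D2 DA Amin.
case: (boolP [forall x in D, forall y in D, erel F A x y]); last first.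
  move=> /forall_inPn [x xD /forall_inPn [y yD nE]]; by exists x, y.
move=> /forall_inP H; exfalso.
case/card_gt1P: D2 => i [j [iD jD ij]].
move: (forall_inP (H i iD) j jD); rewrite /erel (negPf ij) /= => /existsP [X0 /andP [X0F /and3P [X0A iX0 _]]].
pose P X := [&& X \in F, X \proper A & i \in X].
have P0 : P X0 by rewrite /P X0F X0A iX0.
case: (@arg_maxnP _ X0 P (fun X : {set 'I_n} => #|X|) P0) => M /and3P [MF MA iM] Hmax.
have DM : D \subset M.
  apply/subsetP => y yD; case: (eqVneq i y) => [<-//|iy].
  move: (forall_inP (H i iD) y yD); rewrite /erel (negPf iy) /= => /existsP [X /andP [XF /and3P [XA iX yX]]].
  case/orP: (LF _ _ MF XF (meet_ne iM iX)) => [MX|XM]; last exact: subsetP XM _ yX.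
  have h : #|X| <= #|M| by apply: Hmax; rewrite /P XF XA iX.
  have /eqP MeX : M == X by rewrite eqEcard MX h.
  by rewrite MeX.
have AM := Amin M MF DM.
by move: (proper_sub_trans MA AM); rewrite properxx.
Qed.

Lemma side (F : {set {set 'I_n}}) (LF : laminar F) (A D X : {set 'I_n}) i j :
  D \subset A -> i \in D -> X \in F -> i \in X -> j \in X -> ~~ erel F A i j ->
  X \subset A -> X = A.
Proof.
move=> DA iD XF iX jX nE XA; apply/eqP; apply: contraNT nE => XnA.
rewrite /erel; apply/orP; right; apply/existsP; exists X.
by rewrite XF iX jX properEneq XnA XA.
Qed.

Lemma two_rel (T : Type) (e1 e2 : rel T) (P : pred T) :
  symmetric e1 -> transitive e1 -> symmetric e2 -> transitive e2 ->
  forall x1 y1 x2 y2, P x1 -> P y1 -> P x2 -> P y2 ->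
  ~~ e1 x1 y1 -> ~~ e2 x2 y2 ->
  exists i j, [/\ P i, P j, ~~ e1 i j & ~~ e2 i j].
Proof.
move=> s1 t1 s2 t2 x1 y1 x2 y2 px1 py1 px2 py2 n1 n2.
have [k [pk nk]] : exists k, P k /\ ~~ e2 x1 k.
  case: (boolP (e2 x1 x2)) => h; last by exists x2.
  exists y2; split => //; apply: contra n2 => h2.
  by apply: t2 h2; rewrite s2.
case: (boolP (e2 x1 y1)) => h1; last by exists x1, y1.
case: (boolP (e1 x1 k)) => h2; last by exists x1, k.
exists y1, k; split => //.
  apply: contra n1 => h3; apply: t1 h2 _; by rewrite s1.
apply: contra nk => h3; exact: t2 h1 h3.
Qed.

Variables (S1 S2 : {set {set 'I_n}}).
Hypotheses (T1 : setT \in S1) (T2 : setT \in S2).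
Hypotheses (C1 : forall C, C \in S1 -> 1 < #|C|) (C2 : forall C, C \in S2 -> 1 < #|C|).
Hypotheses (L1 : laminar S1) (L2 : laminar S2).

Lemma SU_T : setT \in S1 :|: S2.
Proof. by rewrite inE T1. Qed.

Lemma SU_card C : C \in S1 :|: S2 -> 1 < #|C|.
Proof. by rewrite inE => /orP [/C1|/C2]. Qed.

Lemma PE_lam D : D \in cip (S1 :|: S2) -> exists p : pairT n, cip_lub (S1 :|: S2) (val p) = D.
Proof.
move=> HD.
have D2 := cip_card SU_card HD.
have D0 : D != set0 by apply/set0Pn; case/card_gt1P: D2 => x [y [xD _ _]]; exists x.
have [A AS [DA Amin]] := minimal_elt T1 L1 D0.
have [B BS [DB Bmin]] := minimal_elt T2 L2 D0.
have [x1 [y1 [px1 py1 n1]]] := sep_exists L1 D2 DA Amin.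
have [x2 [y2 [px2 py2 n2]]] := sep_exists L2 D2 DB Bmin.
have [i [j [iD jD ni1 ni2]]] := two_rel (P := fun x => x \in D) (erel_sym S1 A) (erel_trans (A:=A) L1)
   (erel_sym S2 B) (erel_trans (A:=B) L2) px1 py1 px2 py2 n1 n2.
have ij : i != j by apply: contra ni1; rewrite /erel => ->.
have c2 : #|[set i; j]| == 2 by rewrite cards2 ij.
exists (exist _ [set i; j] c2) => /=.
have U2 : 1 < #|[set i; j]| by rewrite (eqP c2).
have [LC UL Lmin] := lubP SU_T U2.
have UD : [set i; j] \subset D by rewrite subUset !sub1set iD jD.
apply/eqP; rewrite eqEsubset Lmin //=.
have [F [F0 FS LF]] := cip_form LC.
rewrite LF; apply/bigcapsP => X XF.
have UX : [set i; j] \subset X.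
  by apply: subset_trans UL _; rewrite LF; apply: bigcap_inf.
have iX : i \in X by apply: (subsetP UX); rewrite !inE eqxx.
have jX : j \in X by apply: (subsetP UX); rewrite !inE eqxx orbT.
move: (subsetP FS _ XF); rewrite inE => /orP [XS|XS].
  case/orP: (L1 XS AS (meet_ne iX (subsetP DA _ iD))) => [XA|AX]; last exact: subset_trans DA AX.
  by rewrite (side L1 DA iD XS iX jX ni1 XA).
case/orP: (L2 XS BS (meet_ne iX (subsetP DB _ iD))) => [XB|BX]; last exact: subset_trans DB BX.
by rewrite (side L2 DB iD XS iX jX ni2 XB).
Qed.

End Lam.
Section TreeFacts.
Variable n : nat.

Fixpoint InT (t : rtree n) (l : seq (rtree n)) : Prop :=
  match l with nil => False | t' :: l' => t' = t \/ InT t l' end.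

Fixpoint rtree_ind' (P : rtree n -> Prop) (HL : forall i, P (Leaf i))
  (HN : forall ts, (forall t, InT t ts -> P t) -> P (Node ts)) (t : rtree n) {struct t} : P t :=
  match t with
  | Leaf i => HL i
  | Node ts => HN ts ((fix aux (l : seq (rtree n)) : forall t, InT t l -> P t :=
      match l return forall t, InT t l -> P t with
      | nil => fun t H => False_ind _ H
      | cons t' l' => fun t H => match H with
          | or_introl e => eq_ind t' P (rtree_ind' HL HN t') t e
          | or_intror H' => aux l' t H'
          end
      end) ts)
  end.

Lemma leaves_ne (t : rtree n) : wf_tree t -> leaves t != [::].
Proof.
elim/rtree_ind': t => [i|ts IH] //=.
case: ts IH => [|t1 ts] IH //= /andP [sz /andP [w1 _]].
have := IH t1 (or_introl erefl) w1.
by case: (leaves t1).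
Qed.

Definition lam_seq (s : seq {set 'I_n}) :=
  forall X Y, X \in s -> Y \in s -> X :&: Y != set0 -> (X \subset Y) || (Y \subset X).

Definition Ptree (t : rtree n) :=
  wf_tree t -> uniq (leaves t) ->
  (forall C, C \in clade_list t -> (1 < #|C|) /\ C \subset [set x in leaves t]) /\
  lam_seq (clade_list t).

Lemma forest (ts : seq (rtree n)) : (forall t, InT t ts -> Ptree t) ->
  all (@wf_tree n) ts -> uniq (flatten (map (@leaves n) ts)) ->
  (forall C, C \in flatten (map (@clade_list n) ts) ->
      (1 < #|C|) /\ C \subset [set x in flatten (map (@leaves n) ts)]) /\
  lam_seq (flatten (map (@clade_list n) ts)).
Proof.
elim: ts => [|t ts IHts] IH //=.
move=> /andP [wt wts]; rewrite cat_uniq => /and3P [ut nh uts].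
have [Ht Lt] := IH t (or_introl erefl) wt ut.
have [Hts Lts] := IHts (fun t' H => IH t' (or_intror H)) wts uts.
split.
  move=> C; rewrite mem_cat => /orP [Ct|Cts].
    have [c s] := Ht C Ct; split => //; apply: subset_trans s _.
    by apply/subsetP => x; rewrite !inE mem_cat => ->.
  have [c s] := Hts C Cts; split => //; apply: subset_trans s _.
  by apply/subsetP => x; rewrite !inE mem_cat => ->; rewrite orbT.
have disj : forall X Y, X \in clade_list t -> Y \in flatten (map (@clade_list n) ts) ->
    X :&: Y != set0 -> false.
  move=> X Y Xt Yts /set0Pn [z]; rewrite inE => /andP [zX zY].
  have [_ sX] := Ht X Xt; have [_ sY] := Hts Y Yts.
  move: (subsetP sX _ zX) (subsetP sY _ zY); rewrite !inE => z1 z2.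
  have hh : has (mem (leaves t)) (flatten (map (@leaves n) ts)) by apply/hasP; exists z.
  by rewrite hh in nh.
move=> X Y; rewrite !mem_cat => /orP [Xt|Xts] /orP [Yt|Yts] XY.
- exact: Lt.
- by have := disj _ _ Xt Yts XY.
- by rewrite setIC in XY; have := disj _ _ Yt Xts XY.
- exact: Lts.
Qed.

Lemma tree_facts (t : rtree n) : Ptree t.
Proof.
elim/rtree_ind': t => [i|ts IH]; first by move=> _ _; split => //= X.
move=> /= /andP [sz wts] ut.
have [Hf Lf] := forest IH wts ut.
have cardL : 1 < #|[set x in flatten (map (@leaves n) ts)]|.
  rewrite cardsE; move/card_uniqP: (ut) => ->.
  case: ts IH sz wts {Hf Lf ut} => [|t1 [|t2 r]] IH //= _ /and3P [w1 w2 _].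
  have := leaves_ne w2; have := leaves_ne w1.
  rewrite size_cat size_cat.
  case: (leaves t1) => // a1 l1 _; case: (leaves t2) => // a2 l2 _ /=.
  by rewrite addSn addnS.
split.
  move=> C; rewrite inE => /orP [/eqP ->|Cf]; first by split.
  exact: Hf.
move=> X Y; rewrite !inE => /orP [/eqP ->|Xf] /orP [/eqP ->|Yf] XY.
- by rewrite subxx.
- by have [_ ->] := Hf Y Yf; rewrite orbT.
- by have [_ ->] := Hf X Xf.
- exact: Lf.
Qed.

Lemma tree_on_facts (T : rtree n) : is_tree_on T -> 1 < n ->
  [/\ setT \in clade T, forall C, C \in clade T -> 1 < #|C| & laminar (clade T)].
Proof.
move=> [wt pe] n2.
have ut : uniq (leaves T) by rewrite (perm_uniq pe) enum_uniq.
have [H L] := tree_facts wt ut.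
split.
- case: T wt pe ut H L => [i|ts] wt pe ut H L.
    by move: (perm_size pe); rewrite size_enum_ord /= => En; rewrite -En in n2.
  rewrite /clade inE /=.
  have -> : [set x in flatten (map (@leaves n) ts)] = setT.
    by apply/setP => x; rewrite !inE -/(leaves (Node ts)) (perm_mem pe) mem_enum inE.
  by rewrite mem_head.
- by move=> C; rewrite /clade inE => /H [].
- by move=> X Y; rewrite /clade !inE; apply: L.
Qed.

End TreeFacts.

Lemma no_pairs (n : nat) : (n <= 1)%N -> pairT n -> False.
Proof.
move=> hn p; have := valP p; move/eqP => c.
have := max_card (mem (val p)); rewrite card_ord.
by rewrite -/(#|val p|) c => h; have := leq_trans h hn.
Qed.

Unset Implicit Arguments.

Theorem proposition3p12 (R : realFieldType) (n : nat) (T1 T2 : rtree n) :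
  is_tree_on T1 -> is_tree_on T2 ->
  forall d : pairT n -> R,
    F_system (clade T1 :|: clade T2) d <-> in_K (clade T1 :|: clade T2) d.
Proof.
move=> H1 H2 d.
case: (leqP n 1) => hn.
  have alt0 : forall C, altsum (clade T1 :|: clade T2) d C = 0%R.
    move=> C; rewrite /altsum big1 // => I _; rewrite /deltaC; case: pickP => [p|_].
      by case: (no_pairs hn p).
    by rewrite GRing.mulr0.
  split => _.
    exists 0%R, (fun _ => 0%R); split => // p; by case: (no_pairs hn p).
  split.
  - by move=> p; case: (no_pairs hn p).
  - by move=> C _; rewrite alt0.
  - by move=> C _; rewrite alt0.
have [t1 c1 l1] := tree_on_facts H1 hn.
have [t2 c2 l2] := tree_on_facts H2 hn.
have ST : setT \in clade T1 :|: clade T2 by rewrite inE t1.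
have SC : forall C, C \in clade T1 :|: clade T2 -> (1 < #|C|)%N.
  by move=> C; rewrite inE => /orP [/c1|/c2].
have PE := PE_lam t1 t2 c1 c2 l1 l2.
split; [exact: (F_K ST SC (d:=d)) | exact: (K_F ST SC PE (d:=d))].
Qed.
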